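(* For every $t_0\in\mathbb{C}^*$ with $|t_0|<3-2\sqrt2$ or $|t_0|>3+2\sqrt2$, the specialized Burau representation $\rho_3^{t_0}:\mathcal{B}_3\to\mathrm{GL}(2,\mathbb{C})$ is faithful.
   Context: $\mathcal{B}_3$ is the braid group on three strands, with generators $\sigma_1,\sigma_2$ and the single relation $\sigma_1\sigma_2\sigma_1=\sigma_2\sigma_1\sigma_2$. For $t_0\in\mathbb{C}^*$, the specialized (reduced) Burau representation $\rho_3^{t_0}$ is the homomorphism defined by $\sigma_1\mapsto\begin{pmatrix}-t_0&1\\0&1\end{pmatrix}$, $\sigma_2\mapsto\begin{pmatrix}1&0\\t_0&-t_0\end{pmatrix}$. *)

(* Defs.v *)
From HB Require Import structures.
From mathcomp Require Import all_boot all_order all_algebra.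
From mathcomp Require Import complex reals.
Set Implicit Arguments. Unset Strict Implicit. Unset Printing Implicit Defensive.
Import Order.TTheory GRing.Theory Num.Theory.
Local Open Scope ring_scope.

(* Words in the free group on sigma_1, sigma_2:
   a letter is (g, e) with g = false for sigma_1, g = true for sigma_2,
   and e = true for the generator, e = false for its inverse. *)
Definition letter := (bool * bool)%type.
Definition bword := seq letter.

Definition s1 : letter := (false, true).
Definition s2 : letter := (true, true).
Definition linv (l : letter) : letter := (l.1, ~~ l.2).

(* Equality in B_3 = < s1, s2 | s1 s2 s1 = s2 s1 s2 >: the smallest congruence
   on words (w.r.t. concatenation) containing free cancellation and the
   braid relation. *)
Inductive braid_eq : bword -> bword -> Prop :=
| beq_refl w : braid_eq w w
| beq_sym u v : braid_eq u v -> braid_eq v u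
| beq_trans u v w : braid_eq u v -> braid_eq v w -> braid_eq u w
| beq_cancel u v l : braid_eq (u ++ [:: l; linv l] ++ v) (u ++ v)
| beq_braid u v : braid_eq (u ++ [:: s1; s2; s1] ++ v) (u ++ [:: s2; s1; s2] ++ v).

Section Burau.
Variable R : realType.
Local Notation C := R[i].

Definition burau_s1 (t : C) : 'M[C]_2 :=
  \matrix_(i < 2, j < 2)
    if (i == 0) && (j == 0) then - t
    else if (i == 0) && (j == 1) then 1
    else if (i == 1) && (j == 0) then 0
    else 1.

Definition burau_s2 (t : C) : 'M[C]_2 :=
  \matrix_(i < 2, j < 2)
    if (i == 0) && (j == 0) then 1
    else if (i == 0) && (j == 1) then 0
    else if (i == 1) && (j == 0) then t
    else - t.

Definition burau_letter (t : C) (l : letter) : 'M[C]_2 :=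
  let M := if l.1 then burau_s2 t else burau_s1 t in
  if l.2 then M else invmx M.

Definition burau (t : C) (w : bword) : 'M[C]_2 :=
  foldr (fun l M => burau_letter t l *m M) 1%:M w.

Definition burau_faithful (t : C) : Prop :=
  forall u v : bword, burau t u = burau t v -> braid_eq u v.
End Burau.

(* Main.v *)
Require Import Defs.
From HB Require Import structures.
From mathcomp Require Import all_boot all_order all_algebra.
From mathcomp Require Import complex reals.
From mathcomp Require Import ring lra.
From Stdlib Require Import Setoid Morphisms.
Import Order.TTheory GRing.Theory Num.Theory.
Local Open Scope ring_scope.

Lemma beq_ctx p q {u v} : braid_eq u v -> braid_eq (p ++ u ++ q) (p ++ v ++ q).
Proof.
elim=> {u v} [w|u v _ IH|u v w _ IH1 _ IH2|u v l|u v].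
- exact: beq_refl.
- exact: beq_sym.
- exact: beq_trans IH1 IH2.
- have -> : p ++ (u ++ [:: l; linv l] ++ v) ++ q = (p ++ u) ++ [:: l; linv l] ++ (v ++ q) by rewrite !catA.
  have -> : p ++ (u ++ v) ++ q = (p ++ u) ++ (v ++ q) by rewrite !catA.
  exact: beq_cancel.
- have -> : p ++ (u ++ [:: s1; s2; s1] ++ v) ++ q = (p ++ u) ++ [:: s1; s2; s1] ++ (v ++ q) by rewrite !catA.
  have -> : p ++ (u ++ [:: s2; s1; s2] ++ v) ++ q = (p ++ u) ++ [:: s2; s1; s2] ++ (v ++ q) by rewrite !catA.
  exact: beq_braid.
Qed.

#[export] Instance beq_Equiv : Equivalence braid_eq.
Proof. split; [exact: beq_refl | exact: beq_sym | exact: beq_trans]. Qed.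

#[export] Instance cat_Proper : Proper (braid_eq ==> braid_eq ==> braid_eq) (@cat letter).
Proof.
move=> u u' Hu v v' Hv.
apply: beq_trans (_ : braid_eq (u' ++ v) _).
  by have := beq_ctx [::] v Hu; rewrite /= .
by have := beq_ctx u' [::] Hv; rewrite cats0 cats0.
Qed.

#[export] Instance cons_Proper l : Proper (braid_eq ==> braid_eq) (cons l).
Proof. move=> u v H. by have := beq_ctx [:: l] [::] H; rewrite !cats0. Qed.

#[local] Hint Resolve beq_refl : core.

Lemma canc l : braid_eq [:: l; linv l] [::].
Proof. exact: (beq_cancel [::] [::] l). Qed.

Lemma linvK l : linv (linv l) = l.
Proof. by case: l => a b; rewrite /linv /= negbK. Qed.

Definition winv (w : bword) : bword := rev (map linv w).

Lemma winvK w : winv (winv w) = w.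
Proof. by rewrite /winv map_rev revK -map_comp (eq_map linvK) map_id. Qed.

Lemma winv_cons l w : winv (l :: w) = winv w ++ [:: linv l].
Proof. by rewrite /winv /= rev_cons cats1. Qed.

Lemma winv_cancel (w : bword) : braid_eq (w ++ winv w) [::].
Proof.
elim: w => [|l w IH]; first exact: beq_refl.
rewrite winv_cons.
have -> : (l :: w) ++ winv w ++ [:: linv l] = [:: l] ++ (w ++ winv w) ++ [:: linv l].
  by rewrite /= -catA.
rewrite IH /=. exact: canc.
Qed.

Lemma winv_cancel' (w : bword) : braid_eq (winv w ++ w) [::].
Proof. by have := winv_cancel (winv w); rewrite winvK. Qed.

Definition central (u : bword) := forall w, braid_eq (u ++ w) (w ++ u).

Lemma central_letters (u : bword) : (forall l, braid_eq (u ++ [:: l]) ([:: l] ++ u)) -> central u.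
Proof.
move=> H w; elim: w => [|l w IH]; first by rewrite cats0.
rewrite -cat1s catA H -catA IH catA. reflexivity.
Qed.

Lemma comm_inv {u : bword} {l : letter} : braid_eq (u ++ [:: l]) ([:: l] ++ u) ->
  braid_eq (u ++ [:: linv l]) ([:: linv l] ++ u).
Proof.
move=> H.
have c1 : braid_eq [:: linv l; l] [::] by have := canc (linv l); rewrite linvK.
transitivity ([:: linv l; l] ++ u ++ [:: linv l]); first by rewrite c1.
have -> : [:: linv l; l] ++ u ++ [:: linv l] = [:: linv l] ++ ([:: l] ++ u) ++ [:: linv l] by [].
rewrite -H -!catA /= (canc l) cats0. reflexivity.
Qed.

Lemma central_pos (u : bword) : (forall l : letter, l.2 -> braid_eq (u ++ [:: l]) ([:: l] ++ u)) -> central u.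
Proof.
move=> H; apply: central_letters => -[a [|]]; first exact: H.
have := comm_inv (H (a, true) isT). by rewrite /linv.
Qed.

Lemma central_cat (u v : bword) : central u -> central v -> central (u ++ v).
Proof. move=> Hu Hv w. rewrite -catA Hv catA Hu -catA. reflexivity. Qed.

Lemma central_winv (u : bword) : central u -> central (winv u).
Proof.
move=> H w.
transitivity (winv u ++ w ++ (u ++ winv u)); first by rewrite winv_cancel cats0.
rewrite (catA w u) -(H w) -(catA u w) (catA (winv u) u) winv_cancel' /=. reflexivity.
Qed.

Definition delta : bword := [:: s1; s2; s1].
Definition D : bword := delta ++ delta.
Definition Di : bword := winv D.
Arguments D : simpl never.
Arguments Di : simpl never.

Lemma central_D : central D.
Proof.
apply: central_pos => -[[] []] // _.
-
  rewrite /D.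
  have e1 : braid_eq (delta ++ [:: s2]) ([:: s1] ++ delta).
    exact: (beq_sym (beq_braid [:: s1] [::])).
  have e2 : braid_eq (delta ++ [:: s1]) ([:: s2] ++ delta).
    exact: (beq_braid [::] [:: s1]).
  rewrite -catA e1 catA e2 -catA. reflexivity.
- have e1 : braid_eq (delta ++ [:: s2]) ([:: s1] ++ delta).
    exact: (beq_sym (beq_braid [:: s1] [::])).
  have e2 : braid_eq (delta ++ [:: s1]) ([:: s2] ++ delta).
    exact: (beq_braid [::] [:: s1]).
  rewrite /D -catA e2 catA e1 -catA. reflexivity.
Qed.

Lemma central_Di : central Di.
Proof. exact: central_winv central_D. Qed.

Inductive syl := SY | SX1 | SX2.
Definition sw (g : syl) : bword :=
  match g with SY => [:: s1; s2; s1] | SX1 => [:: s1; s2] | SX2 => [:: s1; s2; s1; s2] end.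
Fixpoint S (s : seq syl) : bword := if s is g :: r then sw g ++ S r else [::].
Arguments sw : simpl never.
Definition isY (g : syl) := if g is SY then true else false.
Definition alt (g h : syl) := isY g != isY h.
Definition red (s : seq syl) := sorted alt s.

Fixpoint Dp n : bword := if n is n'.+1 then D ++ Dp n' else [::].
Fixpoint Dip n : bword := if n is n'.+1 then Di ++ Dip n' else [::].

Lemma central_Dp n : central (Dp n).
Proof.
elim: n => [|n IH] /=; first by move=> w; rewrite cats0.
exact: central_cat central_D IH.
Qed.

Lemma central_Dip n : central (Dip n).
Proof.
elim: n => [|n IH] /=; first by move=> w; rewrite cats0.
exact: central_cat central_Di IH.
Qed.

Lemma Dp_add m n : Dp (m + n)%N = Dp m ++ Dp n.
Proof. by elim: m => [|m IH] //=; rewrite IH. Qed.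

Lemma S_cat s t : S (s ++ t) = S s ++ S t.
Proof. by elim: s => [|g s IH] //=; rewrite IH catA. Qed.

Lemma x3 : braid_eq (sw SX1 ++ sw SX2) D.
Proof. exact: (beq_sym (beq_braid [:: s1; s2; s1] [::])). Qed.

Lemma red_tail {g s} : red (g :: s) -> red s.
Proof. by case: s => //= h s /andP[]. Qed.

Lemma push g s : red s -> exists c s', red s' /\ braid_eq (sw g ++ S s) (Dp c ++ S s').
Proof.
case: s => [|h r] Hs.
  by exists 0%N, [:: g]; split => //=.
have Hr := red_tail Hs.
case Ea: (alt g h).
  exists 0%N, [:: g, h & r]; split => //=.
  by rewrite /red /= Ea.
have Hr' : forall h', isY h' = isY h -> red (h' :: r).
  move=> h' E; move: Hs; rewrite /red /=.
  by case: r {Hr} => //= k r; rewrite /alt E.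
move: Ea Hr'; clear Hs; case: g; case: h => //= _ Hr'.
- by exists 1%N, r; split => //; exact: beq_refl.
- exists 0%N, (SX2 :: r); split; first exact: Hr'.
  exact: beq_refl.
- exists 1%N, r; split => //.
  change (braid_eq ((sw SX1 ++ sw SX2) ++ S r) (D ++ S r)).
  rewrite x3. reflexivity.
- exists 1%N, r; split => //.
  change (braid_eq ((sw SX1 ++ sw SX2) ++ S r) (D ++ S r)).
  rewrite x3. reflexivity.
- exists 1%N, (SX1 :: r); split; first exact: Hr'.
  change (braid_eq ((sw SX1 ++ sw SX2) ++ sw SX1 ++ S r) (D ++ sw SX1 ++ S r)).
  rewrite x3. reflexivity.
Qed.

Lemma letter_exp l : exists g1 g2, alt g1 g2 /\ braid_eq [:: l] (Di ++ sw g1 ++ sw g2).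
Proof.
suff [g1 [g2 [H1 H2]]] : exists g1 g2, alt g1 g2 /\ braid_eq (D ++ [:: l]) (sw g1 ++ sw g2).
  exists g1, g2; split => //.
  rewrite -H2 catA winv_cancel' /=. reflexivity.
case: l => -[] [].
- by exists SY, SX2.
- exists SX1, SY; split => //.
  rewrite -x3 -catA.
  have -> : sw SX2 ++ [:: (true, false)] = [:: s1; s2; s1] ++ [:: s2; linv s2] ++ [::] by [].
  by rewrite (beq_cancel [:: s1; s2; s1] [::] s2).
- exists SX2, SY; split => //.
  rewrite -x3.
  have -> : sw SX2 ++ sw SY = (sw SX1 ++ sw SX2) ++ [:: s1] by [].
  reflexivity.
- exists SY, SX1; split => //.
  have -> : D ++ [:: (false, false)] = [:: s1; s2; s1; s1; s2] ++ [:: s1; linv s1] ++ [::] by [].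
  by rewrite (beq_cancel [:: s1; s2; s1; s1; s2] [::] s1).
Qed.

Lemma nf w : exists a b s, red s /\ braid_eq w (Dp a ++ Dip b ++ S s).
Proof.
elim: w => [|l w [a [b [s [Hs IH]]]]]; first by exists 0%N, 0%N, [::].
have [g1 [g2 [Hg Hl]]] := letter_exp l.
have [c [s' [Hs' E1]]] := push g2 _ Hs.
have [c' [s'' [Hs'' E2]]] := push g1 _ Hs'.
exists (a + (c + c'))%N, b.+1, s''; split => //.
set P := Dp a ++ Dip b.
have cP : central P by apply: central_cat; [apply: central_Dp | apply: central_Dip].
transitivity ([:: l] ++ (P ++ S s)); first by rewrite -catA -IH.
transitivity (P ++ [:: l] ++ S s); first by rewrite catA -(cP [:: l]) -catA.
rewrite Hl -!catA E1 (catA (sw g1)) -(central_Dp c (sw g1)) -catA E2.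
have cQ : central (Dip b ++ Di) by apply: central_cat; [apply: central_Dip | apply: central_Di].
transitivity (Dp a ++ ((Dip b ++ Di) ++ (Dp c ++ Dp c')) ++ S s''); first by rewrite -!catA.
rewrite (cQ (Dp c ++ Dp c')) -(central_Di (Dip b)) !Dp_add -!catA. reflexivity.
Qed.

Lemma Dp_Dip_cancel a : braid_eq (Dp a ++ Dip a) [::].
Proof.
elim: a => [|a IH]; first exact: beq_refl.
change (braid_eq ((D ++ Dp a) ++ (Di ++ Dip a)) [::]).
rewrite -catA (catA (Dp a)) -(central_Di (Dp a)) -catA IH cats0 winv_cancel. reflexivity.
Qed.

Section Alg.
Variable R : realType.
Local Notation C := R[i].
Variable t : C.
Hypothesis t0 : t != 0.

Definition act (M : 'M[C]_2) (v : C * C) : C * C :=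
  (M 0 0 * v.1 + M 0 1 * v.2, M 1 0 * v.1 + M 1 1 * v.2).

Arguments act : simpl never.

Lemma sum2 (F : 'I_2 -> C) : \sum_(i < 2) F i = F 0 + F 1.
Proof. rewrite big_ord_recl big_ord1; congr (_ + F _); exact: val_inj. Qed.

Lemma actM A B v : act (A *m B) v = act A (act B v).
Proof. rewrite /act !mxE !sum2 /=; congr pair; ring. Qed.

Lemma act1 v : act 1%:M v = v.
Proof. case: v => p q; rewrite /act !mxE /=; congr pair; ring. Qed.

Lemma actZ c M v : act (c *: M) v = (c * (act M v).1, c * (act M v).2).
Proof. rewrite /act !mxE /=; congr pair; ring. Qed.

Lemma act_inj A B : act A (1, 0) = act B (1, 0) -> act A (0, 1) = act B (0, 1) -> A = B.
Proof.
rewrite /act /= !mulr1 !mulr0 !addr0 !add0r => -[e1 e2] [e3 e4].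
apply/matrixP => i j.
have ord2 : forall k : 'I_2, k = 0 \/ k = 1.
  by case=> [[|[|//]] Hk]; [left|right]; apply: val_inj.
by case: (ord2 i) => ->; case: (ord2 j) => ->.
Qed.

Lemma act_s1 v : act (burau_s1 t) v = (- t * v.1 + v.2, v.2).
Proof. rewrite /act !mxE /=. congr pair; ring. Qed.

Lemma act_s2 v : act (burau_s2 t) v = (v.1, t * v.1 - t * v.2).
Proof. rewrite /act !mxE /=. congr pair; ring. Qed.

Definition inv1 : 'M[C]_2 := \matrix_(i < 2, j < 2)
  if (i == 0) && (j == 0) then - t^-1 else if (i == 0) && (j == 1) then t^-1
  else if (i == 1) && (j == 0) then 0 else 1.
Definition inv2 : 'M[C]_2 := \matrix_(i < 2, j < 2)
  if (i == 0) && (j == 0) then 1 else if (i == 0) && (j == 1) then 0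
  else if (i == 1) && (j == 0) then 1 else - t^-1.

Lemma unit_s1 : burau_s1 t \in unitmx.
Proof.
suff /mulmx1_unit[] : burau_s1 t *m inv1 = 1%:M by [].
apply: act_inj; rewrite actM act1 /act !mxE /=; congr pair; field; exact: t0.
Qed.

Lemma unit_s2 : burau_s2 t \in unitmx.
Proof.
suff /mulmx1_unit[] : burau_s2 t *m inv2 = 1%:M by [].
apply: act_inj; rewrite actM act1 /act !mxE /=; congr pair; field; exact: t0.
Qed.

Lemma burau_cat u v : burau t (u ++ v) = burau t u *m burau t v.
Proof. elim: u => [|l u IH] /=; first by rewrite mul1mx. by rewrite IH mulmxA. Qed.

Lemma burau_canc l : burau t [:: l; linv l] = 1%:M.
Proof.
case: l => [[] []]; rewrite /= /burau_letter /= mulmx1.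
- exact: mulmxV unit_s2.
- exact: mulVmx unit_s2.
- exact: mulmxV unit_s1.
- exact: mulVmx unit_s1.
Qed.

Lemma burau_braid : burau t [:: s1; s2; s1] = burau t [:: s2; s1; s2].
Proof.
apply: act_inj; rewrite /= /burau_letter /= !actM !act1; rewrite ?act_s1 ?act_s2 ?act_s1 ?act_s2 /=; congr pair; ring.
Qed.

Lemma burau_sound {u v} : braid_eq u v -> burau t u = burau t v.
Proof.
elim=> {u v} [//|u v _ -> //|u v w _ -> _ -> //|u v l|u v].
- by rewrite !burau_cat burau_canc mul1mx.
- by rewrite !burau_cat burau_braid.
Qed.



Definition M g := burau t (sw g).
Definition sc (c : C) (v : C * C) := (c * v.1, c * v.2).

Lemma burau_letters l w : burau t (l :: w) = burau_letter t l *m burau t w.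
Proof. by []. Qed.

Lemma actY v : act (M SY) v = (- (t * v.2), - (t * t * v.1)).
Proof.
rewrite /M /sw !burau_letters /burau_letter /= !actM act1.
rewrite ?act_s1 ?act_s2 ?act_s1 ?act_s2 /=; congr pair; ring.
Qed.

Lemma actX1 v : act (M SX1) v = (- (t * v.2), t * (v.1 - v.2)).
Proof.
rewrite /M /sw !burau_letters /burau_letter /= !actM act1.
rewrite ?act_s1 ?act_s2 ?act_s1 ?act_s2 /=; congr pair; ring.
Qed.

Lemma actX2 v : act (M SX2) v = (t * t * (v.2 - v.1), - (t * t * v.1)).
Proof.
rewrite /M /sw !burau_letters /burau_letter /= !actM act1.
rewrite ?act_s1 ?act_s2 ?act_s1 ?act_s2 ?act_s1 ?act_s2 /=; congr pair; ring.
Qed.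

Lemma burau_S_rcons s l : burau t (S (rcons s l)) = burau t (S s) *m M l.
Proof. by rewrite -cats1 S_cat burau_cat /= cats0. Qed.

Lemma burau_S_cons g s : burau t (S (g :: s)) = M g *m burau t (S s).
Proof. by rewrite /= burau_cat. Qed.

Section PingPong.
Variables P1 P2 : C * C -> Prop.
Hypothesis HP1 : forall c v, c != 0 -> P1 v -> P1 (sc c v).
Hypothesis HP2 : forall c v, c != 0 -> P2 v -> P2 (sc c v).
Hypothesis Hdisj : forall v, P1 v -> P2 v -> False.
Hypothesis He1 : exists v, P1 v.
Hypothesis He2 : exists v, P2 v.
Hypothesis HY : forall v, P2 v -> P1 (act (M SY) v).
Hypothesis HX1 : forall v, P1 v -> P2 (act (M SX1) v).
Hypothesis HX2 : forall v, P1 v -> P2 (act (M SX2) v).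

Definition Rg (b : bool) := if b then P2 else P1.

Lemma rg_scale b c v : c != 0 -> Rg b v -> Rg b (sc c v).
Proof. by case: b => /=; [apply: HP2 | apply: HP1]. Qed.

Lemma rg_disj {b v} : Rg b v -> Rg (~~ b) v -> False.
Proof. by rewrite /Rg; case: b => /= H1 H2; [exact: (@Hdisj v H2 H1) | exact: (@Hdisj v H1 H2)]. Qed.

Lemma rg_ex b : exists v, Rg b v.
Proof. by case: b. Qed.

Lemma base g v : Rg (isY g) v -> Rg (~~ isY g) (act (M g) v).
Proof. case: g => /=; [exact: HY | exact: HX1 | exact: HX2]. Qed.

Lemma pp {r g} : path alt g r -> forall v, Rg (isY (last g r)) v ->
  Rg (~~ isY g) (act (burau t (S (g :: r))) v).
Proof.
elim: r g => [|h r IH] g /= Hp v Hv.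
  rewrite cats0; exact: base.
move: Hp => /andP[Hgh Hp].
rewrite burau_cat actM.
apply: base.
have -> : isY g = ~~ isY h by move: Hgh; rewrite /alt; case: (isY g); case: (isY h).
exact: IH.
Qed.

Lemma sq g : ~~ isY g -> forall u, P1 u -> P2 (act (M g) (act (M g) u)).
Proof.
case: g => //= _ u Hu.
- rewrite -actM -burau_cat. exact: HX2.
- have -> : act (M SX2) (act (M SX2) u) = sc (t * t * t) (act (M SX1) u).
    rewrite !actX2 actX1 /sc /=; congr pair; ring.
  apply: HP2; last exact: HX1.
  by rewrite !mulf_neq0.
Qed.

Lemma fixv {c A} : c *: A = 1%:M -> forall v, sc c (act A v) = v.
Proof. move=> H v. by rewrite /sc -actZ H act1. Qed.

Lemma caseYX c g r0 l : isY g -> ~~ isY l -> path alt g (rcons r0 l) -> c != 0 ->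
  c *: burau t (S (g :: rcons r0 l)) = 1%:M -> False.
Proof.
move=> Hg Hl; rewrite rcons_path => /andP[Hp Hlast] Hc H.
have := fixv H.
rewrite -rcons_cons burau_S_rcons => Hf.
have [u Hu] := He1.
set v := act (M l) u.
have Hv : P2 v by move: (@base l u); rewrite (negbTE Hl); apply.
have Hlr : isY (last g r0) by move: Hlast; rewrite /alt (negbTE Hl); case: (isY _).
have H1 := pp Hp (act (M l) v).
rewrite Hlr Hg /= in H1.
have H2 : P1 (act (burau t (S (g :: r0)) *m M l) v) by rewrite actM; apply: H1; exact: sq.
apply: (@Hdisj v) => //.
by rewrite -(Hf v); apply: HP1.
Qed.

Lemma pingpong c s : red s -> c != 0 -> c *: burau t (S s) = 1%:M -> s = [::].
Proof.
case: s => [//|g r] Hp Hc H.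
rewrite /red /= in Hp.
case E: (isY g == isY (last g r)).
  exfalso.
  have [v Hv] := rg_ex (isY (last g r)).
  have Hw := pp Hp v Hv.
  rewrite (eqP E) in Hw.
  apply: (rg_disj Hv).
  by rewrite -(fixv H v); apply: rg_scale.
exfalso.
case Hg: (isY g) E => E.
  case: (lastP r) Hp H E => [|r0 l] Hp H E.
    by rewrite /= Hg in E.
  rewrite last_rcons in E.
  by apply: (@caseYX c g r0 l Hg _ Hp Hc H); move: E; case: (isY l).
case: r Hp H E => [|h r1] Hp H E.
  by rewrite /= Hg in E.
move: Hp => /= /andP[Hgh Hp].
have Hh : isY h by move: Hgh; rewrite /alt Hg; case: (isY h).
have Hl : isY (last h r1) by move: E => /=; case: (isY _).
apply: (@caseYX c h r1 g) => //.
- by rewrite Hg.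
- by rewrite rcons_path Hp /alt Hl Hg.
- rewrite -rcons_cons burau_S_rcons.
  move: H; rewrite burau_S_cons scalemxAl => /mulmx1C.
  by rewrite -scalemxAr.
Qed.

End PingPong.

Local Notation N := (@ComplexField.Normc.normc R).

Lemma Nge0 x : 0 <= N x.
Proof. by case: x => a b; rewrite /ComplexField.Normc.normc sqrtr_ge0. Qed.

Lemma Ngt0 {x} : x != 0 -> 0 < N x.
Proof.
move=> H; rewrite lt_def Nge0 andbT; apply/eqP => /ComplexField.Normc.eq0_normc.
by apply/eqP.
Qed.

Lemma NM x y : N (x * y) = N x * N y.
Proof. exact: ComplexField.Normc.normcM. Qed.

Lemma NN x : N (- x) = N x.
Proof. exact: normcN. Qed.

Lemma Ntri x y : N (x + y) <= N x + N y.
Proof. exact: le_normcD. Qed.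

Lemma Nsub x y : N x - N y <= N (x - y).
Proof. have := Ntri (x - y) y; rewrite subrK; lra. Qed.

Lemma Nsub2 x y : N (x - y) <= N x + N y.
Proof. by have := Ntri x (- y); rewrite NN. Qed.

Lemma N0 : N 0 = 0. Proof. exact: ComplexField.Normc.normc0. Qed.
Lemma N1 : N 1 = 1. Proof. exact: ComplexField.Normc.normc1. Qed.

Section Small.
Hypothesis hs : 3 * N t <= 1.
Definition Ps1 (v : C * C) := v.1 != 0 /\ 2 * N v.2 <= N v.1.
Definition Ps2 (v : C * C) := v.2 != 0 /\ 2 * N v.1 <= 3 * N v.2.

Lemma small_HP1 c v : c != 0 -> Ps1 v -> Ps1 (sc c v).
Proof.
move=> Hc [H1 H2]; split; first by rewrite /= mulf_neq0.
rewrite /= !NM. have := Nge0 c; nra.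
Qed.

Lemma small_HP2 c v : c != 0 -> Ps2 v -> Ps2 (sc c v).
Proof.
move=> Hc [H1 H2]; split; first by rewrite /= mulf_neq0.
rewrite /= !NM. have := Nge0 c; nra.
Qed.

Lemma small_disj v : Ps1 v -> Ps2 v -> False.
Proof.
move=> [H1 H2] [H3 H4]. have := Ngt0 H3. have := Nge0 v.1. lra.
Qed.

Lemma small_HY v : Ps2 v -> Ps1 (act (M SY) v).
Proof.
move=> [H1 H2]; rewrite actY; split; first by rewrite /= oppr_eq0 mulf_neq0.
rewrite /= !NN !NM.
have hs1 : 3 * N t <= 1 := hs.
have hs0 := Nge0 t; have n1 := Nge0 v.1; have n2 := Nge0 v.2.
have h1 : 0 <= N t * N t * (3 * N v.2 - 2 * N v.1).
  by apply: mulr_ge0; [exact: mulr_ge0 | lra].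
have h2 : 0 <= N t * N v.2 * (1 - 3 * N t).
  by apply: mulr_ge0; [exact: mulr_ge0 | lra].
nra.
Qed.

Lemma small_HX1 v : Ps1 v -> Ps2 (act (M SX1) v).
Proof.
move=> [H1 H2]; rewrite actX1 /=.
have n1 := Ngt0 H1; have n2 := Nge0 v.2; have hs0 := Nge0 t.
have d := Nsub v.1 v.2.
split.
  rewrite mulf_neq0 //; apply/eqP => E; move: d; rewrite E N0; lra.
rewrite !NN !NM. nra.
Qed.

Lemma small_HX2 v : Ps1 v -> Ps2 (act (M SX2) v).
Proof.
move=> [H1 H2]; rewrite actX2 /=.
have n1 := Ngt0 H1; have n2 := Nge0 v.2; have hs0 := Nge0 t.
have d := Nsub2 v.2 v.1.
split; first by rewrite oppr_eq0 !mulf_neq0.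
rewrite !NN !NM.
have h1 : 0 <= N t * N t by nra.
nra.
Qed.
End Small.

Section Large.
Hypothesis hl : 3 <= N t.
Definition Pl1 (v : C * C) := v.2 != 0 /\ 2 * N v.1 <= N v.2.
Definition Pl2 (v : C * C) := v.1 != 0 /\ 2 * N v.2 <= 3 * N v.1.

Lemma large_HP1 c v : c != 0 -> Pl1 v -> Pl1 (sc c v).
Proof.
move=> Hc [H1 H2]; split; first by rewrite /= mulf_neq0.
rewrite /= !NM. have := Nge0 c; nra.
Qed.

Lemma large_HP2 c v : c != 0 -> Pl2 v -> Pl2 (sc c v).
Proof.
move=> Hc [H1 H2]; split; first by rewrite /= mulf_neq0.
rewrite /= !NM. have := Nge0 c; nra.
Qed.

Lemma large_disj v : Pl1 v -> Pl2 v -> False.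
Proof.
move=> [H1 H2] [H3 H4]. have := Ngt0 H3. have := Nge0 v.2. lra.
Qed.

Lemma large_HY v : Pl2 v -> Pl1 (act (M SY) v).
Proof.
move=> [H1 H2]; rewrite actY; split; first by rewrite /= oppr_eq0 !mulf_neq0.
rewrite /= !NN !NM.
have hl1 : 3 <= N t := hl.
have hs0 := Nge0 t; have n1 := Nge0 v.1; have n2 := Nge0 v.2.
have h1 : 0 <= N t * (3 * N v.1 - 2 * N v.2).
  by apply: mulr_ge0; [exact: hs0 | lra].
have h2 : 0 <= N t * N v.1 * (N t - 3).
  by apply: mulr_ge0; [exact: mulr_ge0 | lra].
nra.
Qed.

Lemma large_HX1 v : Pl1 v -> Pl2 (act (M SX1) v).
Proof.
move=> [H1 H2]; rewrite actX1 /=.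
have n2 := Ngt0 H1; have n1 := Nge0 v.1; have hs0 := Nge0 t.
have d := Nsub2 v.1 v.2.
split; first by rewrite oppr_eq0 mulf_neq0.
rewrite !NN !NM. nra.
Qed.

Lemma large_HX2 v : Pl1 v -> Pl2 (act (M SX2) v).
Proof.
move=> [H1 H2]; rewrite actX2 /=.
have n2 := Ngt0 H1; have n1 := Nge0 v.1; have hs0 := Nge0 t.
have d := Nsub v.2 v.1.
split.
  rewrite !mulf_neq0 //; apply/eqP => E; move: d; rewrite E N0; lra.
rewrite !NN !NM.
have h1 : 0 <= N t * N t by nra.
nra.
Qed.
End Large.

Lemma burau_D : burau t D = (t ^+ 3) *: 1%:M.
Proof.
apply: act_inj; rewrite actZ act1 /D /delta /= /burau_letter /= !actM act1;
rewrite ?act_s1 ?act_s2 ?act_s1 ?act_s2 ?act_s1 ?act_s2 ?act_s1 /=; congr pair; ring.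
Qed.

Lemma scal1_mul (a b : C) : (a *: (1%:M : 'M[C]_2)) *m (b *: 1%:M) = (a * b) *: 1%:M.
Proof. by rewrite -scalemxAl mul1mx scalerA. Qed.

Lemma burau_Di : burau t Di = (t ^+ 3)^-1 *: 1%:M.
Proof.
have H := burau_sound (winv_cancel D).
rewrite burau_cat burau_D -scalemxAl mul1mx in H.
have tn : t ^+ 3 != 0 by rewrite expf_neq0.
have H' : t ^+ 3 *: burau t Di = 1%:M := H.
by rewrite -H' scalerA mulVf // scale1r.
Qed.

Lemma burau_Dp a : burau t (Dp a) = (t ^+ 3) ^+ a *: 1%:M.
Proof.
elim: a => [|a IH]; first by rewrite /= scale1r.
change (Dp a.+1) with (D ++ Dp a).
by rewrite burau_cat burau_D IH scal1_mul -exprS.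
Qed.

Lemma burau_Dip b : burau t (Dip b) = ((t ^+ 3)^-1) ^+ b *: 1%:M.
Proof.
elim: b => [|b IH]; first by rewrite /= scale1r.
change (Dip b.+1) with (Di ++ Dip b).
by rewrite burau_cat burau_Di IH scal1_mul -exprS.
Qed.

Lemma NX x n : N (x ^+ n) = N x ^+ n.
Proof. elim: n => [|n IH]; first by rewrite !expr0 N1. by rewrite !exprS NM IH. Qed.

Lemma faithful_gen (P1 P2 : C * C -> Prop) :
  (forall c v, c != 0 -> P1 v -> P1 (sc c v)) ->
  (forall c v, c != 0 -> P2 v -> P2 (sc c v)) ->
  (forall v, P1 v -> P2 v -> False) ->
  (exists v, P1 v) -> (exists v, P2 v) ->
  (forall v, P2 v -> P1 (act (M SY) v)) ->
  (forall v, P1 v -> P2 (act (M SX1) v)) ->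
  (forall v, P1 v -> P2 (act (M SX2) v)) ->
  N t != 1 ->
  forall u v, burau t u = burau t v -> braid_eq u v.
Proof.
move=> HP1 HP2 Hdisj He1 He2 HY HX1 HX2 Hn u v Huv.
have Hw : burau t (u ++ winv v) = 1%:M.
  by rewrite burau_cat Huv -burau_cat (burau_sound (winv_cancel v)).
have [a [b [s [Hs E]]]] := nf (u ++ winv v).
have HE := burau_sound E.
rewrite Hw !burau_cat burau_Dp burau_Dip mulmxA scal1_mul -scalemxAl mul1mx in HE.
set x := t ^+ 3 in HE.
have xn : x != 0 by rewrite expf_neq0.
have Hc : x ^+ a * x^-1 ^+ b != 0 by rewrite mulf_neq0 // expf_neq0 // invr_eq0.
have s0 := @pingpong P1 P2 HP1 HP2 Hdisj He1 He2 HY HX1 HX2 _ _ Hs Hc (esym HE).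
subst s.
have c1 : x ^+ a * x^-1 ^+ b = 1.
  have := fixv (esym HE) (1, 0); rewrite act1 /sc /= => -[]; rewrite mulr1.
  done.
have xab : x ^+ a = x ^+ b.
  have := congr1 (fun y => y * x ^+ b) c1; rewrite /= mul1r -mulrA exprVn mulVf ?mulr1 //.
  by rewrite expf_neq0.
have ab : a = b.
  have : N t ^+ (3 * a) = N t ^+ (3 * b) by rewrite !exprM -!NX xab.
  move/(ieexprIn (Ngt0 t0) Hn) => /eqP.
  by rewrite eqn_pmul2l // => /eqP.
subst b.
have E' : braid_eq (u ++ winv v) [::].
  rewrite E /= cats0. exact: Dp_Dip_cancel.
transitivity (u ++ (winv v ++ v)); first by rewrite winv_cancel' cats0.
by rewrite catA E'.
Qed.

Lemma small_e1 : Ps1 (1, 0).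
Proof. split; [exact: oner_neq0 | change (2 * N 0 <= N 1); rewrite N0 N1; lra]. Qed.
Lemma small_e2 : Ps2 (0, 1).
Proof. split; [exact: oner_neq0 | change (2 * N 0 <= 3 * N 1); rewrite N0 N1; lra]. Qed.
Lemma large_e1 : Pl1 (0, 1).
Proof. split; [exact: oner_neq0 | change (2 * N 0 <= N 1); rewrite N0 N1; lra]. Qed.
Lemma large_e2 : Pl2 (1, 0).
Proof. split; [exact: oner_neq0 | change (2 * N 0 <= 3 * N 1); rewrite N0 N1; lra]. Qed.
End Alg.

Theorem theorem2 (R : realType) (t0 : R[i]) :
  t0 != 0 ->
  (ComplexField.Normc.normc t0 < 3 - 2 * Num.sqrt 2 \/
   3 + 2 * Num.sqrt 2 < ComplexField.Normc.normc t0) ->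
  burau_faithful t0.
Proof.
move=> tn H.
have r0 : 0 <= Num.sqrt (2 : R) := sqrtr_ge0 _.
have r2 : Num.sqrt (2 : R) ^+ 2 = 2 by rewrite sqr_sqrtr.
have n0 := @Nge0 R t0.
case: H => H.
- have hs : 3 * ComplexField.Normc.normc t0 <= 1 by nra.
  apply: (@faithful_gen R t0 tn (@Ps1 R) (@Ps2 R)).
  + exact: small_HP1.
  + exact: small_HP2.
  + exact: small_disj.
  + by exists (1, 0); apply: small_e1.
  + by exists (0, 1); apply: small_e2.
  + exact: small_HY.
  + exact: small_HX1.
  + exact: small_HX2.
  + apply/eqP => E; rewrite E in hs; lra.
- have hl : 3 <= ComplexField.Normc.normc t0 by lra.
  apply: (@faithful_gen R t0 tn (@Pl1 R) (@Pl2 R)).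
  + exact: large_HP1.
  + exact: large_HP2.
  + exact: large_disj.
  + by exists (0, 1); apply: large_e1.
  + by exists (1, 0); apply: large_e2.
  + exact: large_HY.
  + exact: large_HX1.
  + exact: large_HX2.
  + apply/eqP => E; rewrite E in hl; lra.
Qed.
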